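(* Let $L_1,\dots,L_m$ be signed Laplacians of signed digraphs on $\{1,\dots,n\}$, each weight balanced with $-L_k$ EEP, and let $Q\in\mathbb{R}^{(n-1)\times n}$ satisfy $QQ^\top=I_{n-1}$, $Q\mathbf{1}=0$. Fix an integer $r\ge1$ and set $\hat L_k=L_k\oplus\cdots\oplus L_k$ ($r$-fold Kronecker sum) and $\hat Q=Q\otimes\cdots\otimes Q$ ($r$-fold Kronecker product). If there exists a symmetric positive definite $\hat P\in\mathbb{R}^{n^r\times n^r}$ such that \[ -\hat Q\hat L_k\hat P\hat Q^\top-\hat Q\hat P\hat L_k^\top\hat Q^\top\prec0\quad\text{for all }k=1,\dots,m, \] then $\{L_1,\dots,L_m\}$ is a consensus set for the switched system $\dot{\mathbf{x}}=-L_{\sigma(t)}\mathbf{x}$.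
   Context: For a signed digraph with real weighted adjacency matrix $A$ (entries of any sign), the signed Laplacian is $L=\Sigma-A$, $\Sigma=\mathrm{diag}(\sigma_i)$, $\sigma_i=\sum_jA_{ij}$, so $L\mathbf{1}=0$; weight balanced means $L^\top\mathbf{1}=0$. $M$ is EEP if there is $t_0\ge0$ with $e^{Mt}$ entrywise positive for all real $t\ge t_0$. The Kronecker sum is $A\oplus B=A\otimes I+I\otimes B$, and the $r$-fold version is defined iteratively. $X\prec0$ means symmetric negative definite. A switching signal is a piecewise constant map $\sigma:[0,\infty)\to\{1,\dots,m\}$ with finitely many discontinuities on every bounded interval; a consensus set is one for which, for every switching signal and every $\mathbf{x}(0)$, $\mathbf{x}(t)\to\alpha\mathbf{1}$ for some $\alpha\in\mathbb{R}$. *)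

(* Defs.v *)
From HB Require Import structures.
From mathcomp Require Import all_boot all_order all_algebra.
From mathcomp Require Import all_classical all_reals all_analysis.
From mathcomp Require Import mxtens.
Set Implicit Arguments. Unset Strict Implicit. Unset Printing Implicit Defensive.
Import Order.TTheory GRing.Theory Num.Theory.
Import numFieldNormedType.Exports.
Local Open Scope ring_scope.
Local Open Scope classical_set_scope.

Section Defs.
Variable R : realType.

Definition ones (n : nat) : 'cV[R]_n := const_mx 1.

Definition signed_laplacian (n : nat) (A : 'M[R]_n) : 'M[R]_n :=
  diag_mx (\row_i (\sum_j A i j)) - A.

Definition weight_balanced (n : nat) (L : 'M[R]_n) : Prop :=
  L^T *m ones n = 0.

Definition expmx (n : nat) (M : 'M[R]_n) : 'M[R]_n :=
  \matrix_(i, j) limn (fun N : nat => \sum_(k < N) (M ^+ k) i j / (k`!)%:R).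

Definition EEP (n : nat) (M : 'M[R]_n) : Prop :=
  exists t0 : R, 0 <= t0 /\
    forall t : R, t0 <= t -> forall i j, 0 < expmx (t *: M) i j.

Fixpoint kron_pow (p q : nat) (Q : 'M[R]_(p, q)) (r : nat)
  : 'M[R]_(p ^ r, q ^ r) :=
  match r return 'M[R]_(p ^ r, q ^ r) with
  | 0 => (1%:M : 'M[R]_1)
  | r'.+1 => castmx (esym (expnS p r'), esym (expnS q r')) (Q *t kron_pow Q r')
  end.

(* r-fold Kronecker sum  L (+) ... (+) L,  A (+) B = A (x) I + I (x) B
   (0-fold sum is the 1x1 zero matrix, so the 1-fold sum is L) *)
Fixpoint kron_sum (n : nat) (L : 'M[R]_n) (r : nat) : 'M[R]_(n ^ r) :=
  match r return 'M[R]_(n ^ r) with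
  | 0 => (0 : 'M[R]_1)
  | r'.+1 => castmx (esym (expnS n r'), esym (expnS n r'))
      (L *t (1%:M : 'M[R]_(n ^ r')) + (1%:M : 'M[R]_n) *t kron_sum L r')
  end.

Definition posdef (n : nat) (P : 'M[R]_n) : Prop :=
  P^T = P /\ forall v : 'cV[R]_n, v != 0 -> 0 < (v^T *m P *m v) ord0 ord0.
Definition negdef (n : nat) (X : 'M[R]_n) : Prop :=
  X^T = X /\ forall v : 'cV[R]_n, v != 0 -> (v^T *m X *m v) ord0 ord0 < 0.

(* switching signal: piecewise constant on [0,oo) with finitely many
   discontinuities on every bounded interval *)
Definition locally_const_at (m : nat) (sigma : R -> 'I_m) (t : R) : Prop :=
  exists e : R, 0 < e /\ forall u : R, `|u - t| < e -> sigma u = sigma t.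

Definition switching_signal (m : nat) (sigma : R -> 'I_m) : Prop :=
  forall T : R, exists s : seq R,
    forall t : R, 0 <= t <= T -> t \notin s -> locally_const_at sigma t.

(* x is a solution on [0,oo) of x' = - L_{sigma t} x: continuous, and
   differentiable with the prescribed derivative at every t > 0 that is
   not a switching instant of sigma *)
Definition switched_solution (n m : nat) (L : 'I_m -> 'M[R]_n)
  (sigma : R -> 'I_m) (x : R -> 'cV[R]_n) : Prop :=
  (forall i : 'I_n, continuous (fun t : R => x t i ord0)) /\
  forall t : R, 0 < t -> locally_const_at sigma t ->
    forall i : 'I_n, is_derive t 1 (fun u : R => x u i ord0) ((- L (sigma t) *m x t) i ord0).

Definition consensus_set (n m : nat) (L : 'I_m -> 'M[R]_n) : Prop :=
  forall sigma : R -> 'I_m, switching_signal sigma ->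
  forall x : R -> 'cV[R]_n, switched_solution L sigma x ->
  exists alpha : R, forall i : 'I_n,
    (fun t : R => x t i ord0) @ +oo --> (alpha *: ones n) i ord0.

End Defs.

(* Main.v *)
Require Import Defs.
From HB Require Import structures.
From mathcomp Require Import all_boot all_order all_algebra.
From mathcomp Require Import all_classical all_reals all_analysis.
From mathcomp Require Import mxtens.
From mathcomp.algebra_tactics Require Import ring lra.
Import Order.TTheory GRing.Theory Num.Theory.
Import numFieldNormedType.Exports.
Local Open Scope ring_scope.
Local Open Scope classical_set_scope.
Set Implicit Arguments. Unset Strict Implicit. Unset Printing Implicit Defensive.

Section Alg.
Variable R : realType.

Lemma castmx_mulmx m m' n n' p p' (e1 : m = m') (e2 : n = n') (e3 : p = p')
  (A : 'M[R]_(m, n)) (B : 'M[R]_(n, p)) :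
  castmx (e1, e2) A *m castmx (e2, e3) B = castmx (e1, e3) (A *m B).
Proof. by case: m' / e1; case: n' / e2; case: p' / e3; rewrite !castmx_id. Qed.

Lemma castmx1 m m' (e : m = m') : castmx (e, e) (1%:M : 'M[R]_m) = 1%:M.
Proof. by case: m' / e; rewrite castmx_id. Qed.

Lemma castmxD m m' n n' (e1 : m = m') (e2 : n = n') (A B : 'M[R]_(m, n)) :
  castmx (e1, e2) (A + B) = castmx (e1, e2) A + castmx (e1, e2) B.
Proof. by case: m' / e1; case: n' / e2; rewrite !castmx_id. Qed.

Lemma castmxN m m' n n' (e1 : m = m') (e2 : n = n') (A : 'M[R]_(m, n)) :
  castmx (e1, e2) (- A) = - castmx (e1, e2) A.
Proof. by case: m' / e1; case: n' / e2; rewrite !castmx_id. Qed.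

Lemma tensmx11 m n : (1%:M : 'M[R]_m) *t (1%:M : 'M[R]_n) = 1%:M.
Proof.
apply/matrixP=> i j.
case: (mxtens_indexP i)=> i0 i1; case: (mxtens_indexP j)=> j0 j1.
rewrite tensmxE !mxE.
rewrite (inj_eq (can_inj (@mxtens_indexK _ _))) xpair_eqE.
by case: eqP; case: eqP; rewrite /= ?mulr1 ?mulr0 ?mul0r.
Qed.

Fixpoint vpow (n : nat) (x : 'cV[R]_n) (r : nat) : 'cV[R]_(n ^ r) :=
  match r return 'cV[R]_(n ^ r) with
  | 0 => (1%:M : 'M[R]_1)
  | r'.+1 => castmx (esym (expnS n r'), muln1 1) (x *t vpow x r')
  end.

Lemma kron_pow_vpow p q (Q : 'M[R]_(p, q)) (x : 'cV[R]_q) r :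
  kron_pow Q r *m vpow x r = vpow (Q *m x) r.
Proof.
elim: r => [|r IH] /=; first by rewrite mul1mx.
by rewrite castmx_mulmx tensmx_mul IH.
Qed.

Lemma kron_pow_tr p (Q : 'M[R]_(p.-1, p)) r :
  Q *m Q^T = 1%:M -> kron_pow Q r *m (kron_pow Q r)^T = 1%:M.
Proof.
move=> QQ; elim: r => [|r IH] /=; first by rewrite mul1mx trmx1.
rewrite trmx_cast /= castmx_mulmx trmx_tens tensmx_mul QQ IH tensmx11.
exact: castmx1.
Qed.

Lemma kron_pow_sum p q (Q : 'M[R]_(p, q)) (L : 'M[R]_q) (Lt : 'M[R]_p) r :
  Q *m L = Lt *m Q ->
  kron_pow Q r *m kron_sum L r = kron_sum Lt r *m kron_pow Q r.
Proof.
move=> QL; elim: r => [|r IH] /=; first by rewrite mulmx0 mul0mx.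
rewrite !castmx_mulmx mulmxDr mulmxDl !tensmx_mul.
by rewrite QL IH !mulmx1 !mul1mx.
Qed.

End Alg.

Section Coer.
Variable R : realType.

Lemma entry_le_norm m n (x : 'M[R]_(m, n)) i j : `|x i j| <= `|x|.
Proof.
rewrite -[`|x|]/(mx_norm x) mx_normrE.
by rewrite (bigD1 (i, j)) //= le_max lexx.
Qed.

Lemma continuous_sumf (T : topologicalType) (I : Type) (s : seq I)
  (g : I -> T -> R) :
  (forall i, continuous (g i)) -> continuous (fun w => \sum_(i <- s) g i w).
Proof.
move=> cg; elim: s => [|a s IH].
  under eq_fun do rewrite big_nil; exact: cst_continuous.
under eq_fun do rewrite big_cons.
by move=> w; apply: continuousD; [exact: cg|exact: IH].
Qed.

Definition qf N (S : 'M[R]_N) (w : 'rV[R]_N) : R := (w *m S *m w^T) ord0 ord0.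

Lemma qf_sum N (S : 'M[R]_N) w :
  qf S w = \sum_i \sum_j w ord0 i * S i j * w ord0 j.
Proof.
rewrite exchange_big /qf mxE; apply: eq_bigr => j _; rewrite [in LHS]mxE mulr_suml.
by apply: eq_bigr => i _; rewrite mxE.
Qed.

Lemma qf_cont N (S : 'M[R]_N) : continuous (qf S).
Proof.
have -> : qf S = (fun w => \sum_i \sum_j w ord0 i * S i j * w ord0 j).
  by apply: funext => w; rewrite qf_sum.
apply: continuous_sumf => i; apply: continuous_sumf => j w.
apply: (@continuousM R _ (fun w : 'rV[R]_N => w ord0 i * S i j) (fun w => w ord0 j)); last exact: coord_continuous.
apply: (@continuousM R _ (fun w : 'rV[R]_N => w ord0 i) (fun=> S i j)); first exact: coord_continuous.
exact: cst_continuous.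
Qed.

Lemma qfZ N (S : 'M[R]_N) k w : qf S (k *: w) = k ^+ 2 * qf S w.
Proof.
by rewrite /qf linearZ /= -!scalemxAl -scalemxAr !mxE expr2 mulrA.
Qed.

Lemma coercive N (S : 'M[R]_N) :
  (forall w : 'rV[R]_N, w != 0 -> 0 < qf S w) ->
  exists2 l, 0 < l & forall w, l * `|w| ^+ 2 <= qf S w.
Proof.
move=> pos.
have qf0 : qf S 0 = 0 by rewrite -(scale0r (0 : 'rV[R]_N)) qfZ expr2 !mul0r.
pose A := [set w : 'rV[R]_N | `|w| = 1].
have unitA w : w != 0 -> A (`|w|^-1 *: w).
  move=> w0; rewrite /A /= normrZ normfV normr_id mulVf //.
  by rewrite normr_eq0.
have [[c Ac]|A0] := pselect (A !=set0); last first.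
  exists 1 => // w; have [->|w0] := eqVneq w 0.
    by rewrite qf0 normr0 expr2 !mul0r mulr0.
  by exfalso; apply: A0; exists (`|w|^-1 *: w); apply: unitA.
have cA : compact A.
  apply: bounded_closed_compact.
    exists 1; split; first by rewrite num_real.
    by move=> M M1 w; rewrite /A /= => ->; apply: ltW.
  apply: (@preimage_closed _ _ (fun w : 'rV[R]_N => `|w|) [set 1]).
    by move=> w _; apply: norm_continuous.
  exact: closed_eq.
have [c' /set_mem Ac' cmin] := compact_EVT_min (ex_intro _ c Ac) cA
   (continuous_subspaceT (@qf_cont N S)).
have c'0 : c' != 0.
  by apply/eqP=> c'0; move: Ac'; rewrite /A /= c'0 normr0 => /eqP; rewrite eq_sym oner_eq0.
exists (qf S c'); first exact: pos.
move=> w; have [->|w0] := eqVneq w 0.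
  by rewrite qf0 normr0 expr2 !mul0r mulr0.
have := cmin _ (mem_set (unitA w w0)); rewrite qfZ exprVn.
have wp : 0 < `|w| ^+ 2 by rewrite exprn_gt0 // normr_gt0.
by rewrite ler_pdivlMl // mulrC.
Qed.

End Coer.

Section Mono.
Variable R : realType.

Lemma nonincr (f df : R -> R) (s : seq R) (a b : R) :
  a <= b -> continuous f ->
  (forall t, a < t -> t < b -> t \notin s -> is_derive t 1 f (df t) /\ df t <= 0) ->
  f b <= f a.
Proof.
elim: s a b => [|p s IH] a b ab cf H.
  case: (ltgtP a b) ab => // [altb _|-> _]; last by [].
  have itv x : x \in `]a, b[%R -> a < x /\ x < b by rewrite in_itv /= => /andP.
  have [c cab] := MVT altb (fun x xab => (H x (itv x xab).1 (itv x xab).2 (negbT (in_nil x))).1)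
     (continuous_subspaceT cf).
  move/eqP; rewrite subr_eq => /eqP->.
  rewrite gerDr; apply: mulr_le0_ge0; last by rewrite subr_ge0 ltW.
  exact: (H c (itv c cab).1 (itv c cab).2 (negbT (in_nil c))).2.
have [/andP[ap pb]|np] := boolP ((a < p) && (p < b)).
  apply: (@le_trans _ _ (f p)).
    apply: IH => //; first exact: ltW.
    move=> t pt tb ts; apply: H => //; first exact: lt_trans ap pt.
    by rewrite inE negb_or ts andbT; apply: contraTN pt => /eqP->; rewrite ltxx.
  apply: IH => //; first exact: ltW.
  move=> t aT tb ts; apply: H => //; first exact: lt_trans tb pb.
  by rewrite inE negb_or ts andbT; apply: contraTN tb => /eqP->; rewrite ltxx.
apply: IH => // t aT tb ts; apply: H => //.
rewrite inE negb_or ts andbT; apply: contra np => /eqP <-.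
by rewrite aT tb.
Qed.

End Mono.

Section Der.
Variable R : realType.

Lemma is_deriveM' (a b : R -> R) (t da db : R) :
  is_derive t 1 a da -> is_derive t 1 b db ->
  is_derive t 1 (fun u => a u * b u) (a t * db + b t * da).
Proof. by move=> Ha Hb; have := is_deriveM Ha Hb. Qed.

Lemma is_derive_sumf N (h : 'I_N -> R -> R) (t : R) (dh : 'I_N -> R) :
  (forall i, is_derive t 1 (h i) (dh i)) ->
  is_derive t 1 (fun u => \sum_(i < N) h i u) (\sum_(i < N) dh i).
Proof. by move=> H; rewrite -fct_sumE; apply: is_derive_sum. Qed.

Definition dmx m n (f : R -> 'M[R]_(m, n)) (t : R) (D : 'M[R]_(m, n)) :=
  forall i j, is_derive t 1 (fun u => f u i j) (D i j).

Lemma dmx_eq m n (f : R -> 'M[R]_(m, n)) (t : R) D D' : dmx f t D -> D = D' -> dmx f t D'.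
Proof. by move=> H <-. Qed.

Lemma dmx_cst m n (A : 'M[R]_(m, n)) (t : R) : dmx (fun=> A) t 0.
Proof. by move=> i j; rewrite mxE; apply: is_derive_cst. Qed.

Lemma dmx_mulmx m n p (f : R -> 'M[R]_(m, n)) (g : R -> 'M[R]_(n, p)) (t : R) D E :
  dmx f t D -> dmx g t E -> dmx (fun u => f u *m g u) t (f t *m E + D *m g t).
Proof.
move=> Hf Hg i j.
have -> : (f t *m E + D *m g t) i j = \sum_k (f t i k * E k j + g t k j * D i k).
  by rewrite !mxE -big_split; apply: eq_bigr => k _; rewrite [D i k * _]mulrC.
have -> : (fun u => (f u *m g u) i j) = (fun u => \sum_k f u i k * g u k j).
  by apply: funext => u; rewrite mxE.
apply: is_derive_sumf => k; exact: is_deriveM'.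
Qed.

Lemma dmx_lmul m n p (A : 'M[R]_(m, n)) (g : R -> 'M[R]_(n, p)) (t : R) E :
  dmx g t E -> dmx (fun u => A *m g u) t (A *m E).
Proof.
move=> Hg; apply: dmx_eq (dmx_mulmx (dmx_cst A t) Hg) _.
by rewrite mul0mx addr0.
Qed.

Lemma dmx_tr m n (f : R -> 'M[R]_(m, n)) (t : R) D : dmx f t D -> dmx (fun u => (f u)^T) t D^T.
Proof.
move=> H i j; rewrite mxE.
have -> : (fun u => (f u)^T i j) = (fun u => f u j i) by apply: funext => u; rewrite mxE.
exact: H.
Qed.

Lemma dmx_cast m n m' n' (e : (m = m') * (n = n')) (f : R -> 'M[R]_(m, n)) (t : R) D :
  dmx f t D -> dmx (fun u => castmx e (f u)) t (castmx e D).
Proof.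
move=> H i j; rewrite castmxE.
have -> : (fun u => castmx e (f u) i j) =
   (fun u => f u (cast_ord (esym e.1) i) (cast_ord (esym e.2) j)).
  by apply: funext => u; rewrite castmxE.
exact: H.
Qed.

Lemma dmx_tens m n p q (f : R -> 'M[R]_(m, n)) (g : R -> 'M[R]_(p, q)) (t : R) D E :
  dmx f t D -> dmx g t E -> dmx (fun u => f u *t g u) t (D *t g t + f t *t E).
Proof.
move=> Hf Hg i j; rewrite !mxE.
have -> : (fun u => (f u *t g u) i j) = (fun u =>
    f u (mxtens_unindex i).1 (mxtens_unindex j).1 *
    g u (mxtens_unindex i).2 (mxtens_unindex j).2).
  by apply: funext => u; rewrite mxE.
apply: is_derive_eq (is_deriveM' (Hf _ _) (Hg _ _)) _.
by rewrite addrC [g t _ _ * _]mulrC.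
Qed.

Lemma tensmxNl m n p q (A : 'M[R]_(m, n)) (B : 'M[R]_(p, q)) : (- A) *t B = - (A *t B).
Proof. by apply/matrixP => i j; rewrite !mxE mulNr. Qed.
Lemma tensmxNr m n p q (A : 'M[R]_(m, n)) (B : 'M[R]_(p, q)) : A *t (- B) = - (A *t B).
Proof. by apply/matrixP => i j; rewrite !mxE mulrN. Qed.

End Der.

Section Tail.
Variable R : realType.

Lemma tail (z : R -> R) (p : nat) (C c : R) :
  (0 < p)%N -> 0 < c ->
  (forall t, 0 <= t -> `|z t| ^+ p <= C / (1 + c * t)) ->
  z @ +oo --> 0.
Proof.
move=> p0 c0 hb; apply/cvgrPdist_le => e e0.
have ep : 0 < e ^+ p by rewrite exprn_gt0.
exists (Num.max 0 (C / (c * e ^+ p))); split; first by rewrite num_real.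
move=> t /=; rewrite gt_max => /andP[t0 tC].
rewrite sub0r normrN.
have H := hb t (ltW t0).
have ct : 0 < 1 + c * t by rewrite ltr_wpDr // mulr_ge0 // ltW.
have : C / (1 + c * t) <= e ^+ p.
  rewrite ler_pdivrMr //.
  move: tC; rewrite ltr_pdivrMr ?mulr_gt0 // => tC.
  nra.
by move=> /(le_trans H); rewrite ler_pXn2r // ?nnegrE ?normr_ge0 ?(ltW e0).
Qed.



Lemma is_derive_expRc (c t : R) :
  is_derive t 1 (fun u => expR (c * u)) (c * expR (c * t)).
Proof.
pose f := fun u : R => c * u.
have Hc : is_derive t (1:R) f c.
  apply: is_derive_eq (is_deriveM' (is_derive_cst c t 1) (is_derive_id t 1)) _.
  by rewrite /= mulr1 mulr0 addr0.
have dl : derivable f t 1 by apply: ex_derive.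
have de : derivable (@expR R) (f t) 1 by apply: ex_derive.
change (is_derive t 1 (expR \o f) (c * expR (f t))).
apply: DeriveDef.
  apply/derivable1_diffP; apply: differentiable_comp; exact/derivable1_diffP.
have := derive1_comp dl de.
rewrite !derive1E => ->.
rewrite (@derive_val _ _ _ _ _ _ _ Hc) (@derive_val _ _ _ _ _ _ _ (is_derive_expR (f t))).
by rewrite mulrC.
Qed.

End Tail.

Section Core.
Variable R : realType.

Lemma posdef_rows N (P : 'M[R]_N) :
  (forall v : 'cV[R]_N, v != 0 -> 0 < (v^T *m P *m v) ord0 ord0) ->
  forall w : 'rV[R]_N, w != 0 -> 0 < qf P w.
Proof.
move=> H w w0; have := H w^T; rewrite trmx_eq0 trmxK; exact.
Qed.

Lemma fin_arith (Y W Vt V0 K2 lP a : R) : 0 <= Y -> 0 <= W -> 0 < lP -> 0 < a ->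
  0 <= K2 -> Y <= K2 * W -> lP * W <= Vt -> a * Vt <= V0 -> Y <= K2 * V0 / lP / a.
Proof.
move=> Y0 W0 lP0 a0 K0 h1 h2 h3.
rewrite ler_pdivlMr // ler_pdivlMr //.
have p1 : 0 <= a * lP by rewrite mulr_ge0 // ltW.
have p2 : 0 <= K2 * a by rewrite mulr_ge0 // ltW.
nra.
Qed.

Lemma lyap_id N (Pt M L : 'M[R]_N) (v : 'cV[R]_N) :
  Pt^T = Pt -> Pt *m M = 1%:M -> M *m Pt = 1%:M ->
  (Pt *m v)^T *m (M *m (- L *m (Pt *m v))) + (- L *m (Pt *m v))^T *m (M *m (Pt *m v))
  = - (v^T *m (L *m Pt + Pt *m L^T) *m v).
Proof.
move=> PtT PM MP.
have e1 : M *m (Pt *m v) = v by rewrite mulmxA MP mul1mx.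
have e2 : (Pt *m v)^T = v^T *m Pt by rewrite trmx_mul PtT.
rewrite e1 !mulNmx !mulmxN linearN /= trmx_mul PtT !trmx_mul PtT !mulmxA.
rewrite -(mulmxA v^T Pt M) PM mulmx1.
by rewrite mulmxDr mulmxDl opprD !mulmxA mulNmx.
Qed.

Lemma core N m (Lt : 'I_m -> 'M[R]_N) (Pt : 'M[R]_N) (sigma : R -> 'I_m)
  (y : R -> 'cV[R]_N) :
  posdef Pt ->
  (forall k (v : 'cV[R]_N), v != 0 ->
     0 < (v^T *m (Lt k *m Pt + Pt *m (Lt k)^T) *m v) ord0 ord0) ->
  switching_signal sigma ->
  (forall i, continuous (fun t => y t i ord0)) ->
  (forall t, 0 < t -> locally_const_at sigma t -> dmx y t (- Lt (sigma t) *m y t)) ->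
  exists C c, 0 < c /\ 0 <= C /\ forall t, 0 <= t -> forall i,
     `|y t i ord0| ^+ 2 <= C / (1 + c * t).
Proof.
move=> [PtT PtP] Spos sw ycont yder.
have PtU : Pt \in unitmx.
  rewrite unitmxE unitfE; apply/negP => /det0P [v v0 vP].
  have := PtP v^T; rewrite trmx_eq0 => /(_ v0); rewrite trmxK vP mul0mx mxE ltxx.
  by [].
set M := invmx Pt.
have PM : Pt *m M = 1%:M by apply: mulmxV.
have MP : M *m Pt = 1%:M by apply: mulVmx.
have MT : M^T = M by rewrite /M trmx_inv PtT.
pose S k := Lt k *m Pt + Pt *m (Lt k)^T.
have [l l0 lS] : exists2 l, 0 < l & forall k w, l * `|w| ^+ 2 <= qf (S k) w.
  have : forall k, exists2 l, 0 < l & forall w, l * `|w| ^+ 2 <= qf (S k) w.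
    by move=> k; apply: coercive; apply: posdef_rows; apply: Spos.
  case/fin_all_exists2 => lf lf0 lfS.
  exists (\big[Num.min/1]_k lf k).
    by elim/big_ind: _ => // a b a0 b0; rewrite lt_min a0 b0.
  move=> k w; apply: le_trans (lfS k w); apply: ler_wpM2r; first exact: exprn_ge0.
  by rewrite (bigD1 k) //= ge_min lexx.
have [lP lP0 lPP] : exists2 l, 0 < l & forall w, l * `|w| ^+ 2 <= qf Pt w.
  by apply: coercive; apply: posdef_rows.
pose K := 1 + \sum_i \sum_j `|Pt i j|.
have K0 : 0 < K.
  by rewrite ltr_pwDl // sumr_ge0 // => i _; rewrite sumr_ge0.
have Ksum : \sum_i \sum_j `|Pt i j| <= K by rewrite lerDr.
have Vup w : qf Pt w <= K * `|w| ^+ 2.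
  rewrite qf_sum.
  apply: (@le_trans _ _ (\sum_i \sum_j `|Pt i j| * `|w| ^+ 2)).
    apply: ler_sum => i _; apply: ler_sum => j _.
    have hi := entry_le_norm w ord0 i; have hj := entry_le_norm w ord0 j.
    apply: le_trans (ler_norm _) _; rewrite !normrM.
    rewrite [_ * `|Pt i j|]mulrC -mulrA; apply: ler_wpM2l => //.
    by rewrite expr2; apply: ler_pM.
  under eq_bigr do rewrite -mulr_suml.
  rewrite -mulr_suml; apply: ler_wpM2r; first exact: exprn_ge0.
  exact: Ksum.
have yent w i : `|(Pt *m w) i ord0| <= K * `|w^T|.
  rewrite mxE; apply: le_trans (ler_norm_sum _ _ _) _.
  apply: (@le_trans _ _ (\sum_j `|Pt i j| * `|w^T|)).
    apply: ler_sum => j _; rewrite normrM; apply: ler_wpM2l => //.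
    by have := entry_le_norm w^T ord0 j; rewrite mxE.
  rewrite -mulr_suml mulrC [K * _]mulrC; apply: ler_wpM2l => //.
  apply: le_trans Ksum; rewrite [X in _ <= X](bigD1 i) //= lerDl sumr_ge0 // => i' _.
  exact: sumr_ge0.
pose w t := M *m y t.
have yw t : y t = Pt *m w t by rewrite /w mulmxA PM mul1mx.
pose V t := ((y t)^T *m (M *m y t)) ord0 ord0.
have VE t : V t = qf Pt (w t)^T.
  rewrite /V /qf trmxK -/(w t) {1}yw trmx_mul PtT.
  by [].
have Vcont : continuous V.
  have -> : V = (fun t => \sum_i \sum_j y t i ord0 * M i j * y t j ord0).
    apply: funext => t; have -> : V t = qf M (y t)^T by rewrite /V /qf trmxK mulmxA.
    by rewrite qf_sum; apply: eq_bigr => i _; apply: eq_bigr => j _; rewrite !mxE.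
  apply: continuous_sumf => i; apply: continuous_sumf => j t.
  apply: (@continuousM R _ (fun t => y t i ord0 * M i j) (fun t => y t j ord0)); last exact: ycont.
  apply: (@continuousM R _ (fun t => y t i ord0) (fun=> M i j)); first exact: ycont.
  exact: cst_continuous.
have Vder t : 0 < t -> locally_const_at sigma t ->
    is_derive t 1 V (- qf (S (sigma t)) (w t)^T).
  move=> t0 lc; have Hy := yder t t0 lc.
  have H := dmx_mulmx (dmx_tr Hy) (dmx_lmul M Hy) ord0 ord0.
  apply: is_derive_eq H _.
  rewrite /qf trmxK /S (yw t) lyap_id // mxE.
  by [].
pose c := l / K.
have c0 : 0 < c by rewrite divr_gt0.
have Vdec t : - qf (S (sigma t)) (w t)^T <= - c * V t.
  rewrite VE; have h1 := lS (sigma t) (w t)^T; have h2 := Vup (w t)^T.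
  rewrite mulNr lerN2 /c mulrAC ler_pdivrMr //.
  set X := `|_| ^+ 2 in h1 h2.
  nra.
pose g t := expR (c * t) * V t.
have gdec T : 0 <= T -> g T <= g 0.
  move=> T0; have [s Hs] := sw T.
  apply: (@nonincr _ g (fun t => expR (c * t) * (- qf (S (sigma t)) (w t)^T) +
     V t * (c * expR (c * t))) s 0 T T0).
    move=> t; apply: (@continuousM R _ (fun u => expR (c * u)) V); last exact: Vcont.
    apply: (@continuous_comp _ _ _ (fun u => c * u) expR); last exact: continuous_expR.
    apply: (@continuousM R _ (cst c) id); first exact: cst_continuous.
    by [].
  move=> t t0 tT ts.
  have lc : locally_const_at sigma t by apply: Hs => //; rewrite (ltW t0) (ltW tT).
  split; first exact: is_deriveM' (is_derive_expRc c t) (Vder t t0 lc).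
  have := Vdec t; have := expR_gt0 (c * t); nra.
exists (K ^+ 2 * V 0 / lP), c; split => //; split.
  have h0 := lPP (w 0)^T; rewrite -VE in h0.
  have V00 : 0 <= V 0 by apply: le_trans h0; rewrite mulr_ge0 ?exprn_ge0 // ltW.
  by rewrite divr_ge0 ?mulr_ge0 ?exprn_ge0 // ltW.
move=> t t0 i.
have gT := gdec t t0; rewrite /g mulr0 expR0 mul1r in gT.
have e1 := expR_ge1Dx (c * t).
have hw := lPP (w t)^T; rewrite -VE in hw.
set W := `|(w t)^T| ^+ 2 in hw.
have W0 : 0 <= W by apply: exprn_ge0.
have Vt0 : 0 <= V t by apply: le_trans hw; apply: mulr_ge0 => //; apply: ltW.
have ct : 0 < 1 + c * t by rewrite ltr_wpDr // mulr_ge0 // ltW.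
have hV : (1 + c * t) * V t <= V 0.
  apply: le_trans gT; apply: ler_wpM2r => //.
have hy : `|y t i ord0| ^+ 2 <= K ^+ 2 * W.
  rewrite (yw t) /W -exprMn; apply: lerXn2r; rewrite ?nnegrE //.
    by apply: mulr_ge0 => //; apply: ltW.
apply: fin_arith hy hw hV => //; rewrite ?exprn_ge0 ?normr_ge0 // ?ltW //.
Qed.

End Core.

Section Lin.
Variable R : realType.

Lemma lap_ones n (A : 'M[R]_n) : signed_laplacian A *m ones R n = 0.
Proof.
apply/matrixP => i j; rewrite !mxE.
under eq_bigr do rewrite !mxE.
under eq_bigr do rewrite mulr1.
rewrite sumrB [X in X - _](bigD1 i) //= eqxx mulr1n [X in _ + X - _]big1 ?addr0 ?subrr //.
by move=> k ki; rewrite eq_sym (negbTE ki) mulr0n.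
Qed.

Lemma ones_tr_ones n : (ones R n)^T *m ones R n = n%:R%:M.
Proof.
apply/matrixP => i j; rewrite !mxE (ord1 i) (ord1 j) eqxx mulr1n.
under eq_bigr do rewrite !mxE mulr1.
by rewrite sumr_const card_ord.
Qed.

Lemma QtQ n (Q : 'M[R]_(n.-1, n)) : (0 < n)%N -> Q *m Q^T = 1%:M ->
  Q *m ones R n = 0 ->
  Q^T *m Q + n%:R^-1 *: (ones R n *m (ones R n)^T) = 1%:M.
Proof.
move=> n0 QQ Q1.
have nz : n%:R != 0 :> R by rewrite pnatr_eq0 -lt0n.
set J := n%:R^-1 *: (ones R n *m (ones R n)^T).
set E := 1%:M - (Q^T *m Q + J).
suff E0 : E = 0 by move/eqP: E0; rewrite subr_eq0 => /eqP <-.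
have QJ : Q *m J = 0 by rewrite /J -scalemxAr mulmxA Q1 mul0mx scaler0.
have QE : Q *m E = 0.
  by rewrite /E mulmxBr mulmxDr QJ addr0 mulmx1 mulmxA QQ mul1mx subrr.
have oQ : (ones R n)^T *m Q^T = 0 by rewrite -trmx_mul Q1 trmx0.
have oJ : (ones R n)^T *m J = (ones R n)^T.
  rewrite /J -scalemxAr mulmxA ones_tr_ones mul_scalar_mx scalerA mulVf //.
  by rewrite scale1r.
have oE : (ones R n)^T *m E = 0.
  by rewrite /E mulmxBr mulmxDr mulmxA oQ mul0mx add0r oJ mulmx1 subrr.
have ET : E^T = E.
  by rewrite /E linearB linearD /= trmx1 trmx_mul trmxK /J linearZ /= trmx_mul trmxK.
have EE : E^T *m E = E.
  rewrite ET {1}/E mulmxBl mul1mx mulmxDl -mulmxA QE mulmx0 add0r.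
  by rewrite /J -scalemxAl -mulmxA oE mulmx0 scaler0 subr0.
have trE : \tr E = 0.
  have hn : (n.-1)%:R + 1 = n%:R :> R by rewrite natr1 prednK.
  rewrite /E raddfB /= mxtraceD mxtrace1 mxtrace_mulC QQ mxtrace1.
  rewrite /J mxtraceZ mxtrace_mulC ones_tr_ones mxtrace_scalar mulr1n mulVf //.
  by rewrite hn subrr.
have : \sum_i \sum_j E j i ^+ 2 = 0.
  transitivity (\tr (E^T *m E)); last by rewrite EE trE.
  rewrite /mxtrace; apply: eq_bigr => i _; rewrite mxE.
  by apply: eq_bigr => j _; rewrite [E^T _ _]mxE expr2.
move/eqP; rewrite psumr_eq0; last by move=> i _; apply: sumr_ge0 => j _; exact: sqr_ge0.
move/allP => H; apply/matrixP => j i; rewrite [RHS]mxE.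
have := H i (mem_index_enum _); rewrite implyTb psumr_eq0; last by move=> k _; exact: sqr_ge0.
move/allP/(_ j (mem_index_enum _)); rewrite implyTb sqrf_eq0.
by move/eqP.
Qed.

Lemma QL_comm n (Q : 'M[R]_(n.-1, n)) (L : 'M[R]_n) : (0 < n)%N -> Q *m Q^T = 1%:M ->
  Q *m ones R n = 0 -> L *m ones R n = 0 ->
  Q *m L = (Q *m L *m Q^T) *m Q.
Proof.
move=> n0 QQ Q1 L1.
have := QtQ n0 QQ Q1 => /(congr1 (mulmx (Q *m L))).
rewrite mulmx1 mulmxDr -scalemxAr !mulmxA -(mulmxA Q L (ones R n)) L1 mulmx0 mul0mx scaler0 addr0.
by move=> ->.
Qed.

End Lin.

Section VP.
Variable R : realType.

Lemma dmx_vpow n (L : 'M[R]_n) (x : R -> 'cV[R]_n) (t : R) r :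
  dmx x t (- L *m x t) ->
  dmx (fun u => vpow (x u) r) t (- kron_sum L r *m vpow (x t) r).
Proof.
move=> H; elim: r => [|r IH] /=.
  by apply: dmx_eq (dmx_cst _ _) _; rewrite mulNmx mul0mx oppr0.
apply: dmx_eq (dmx_cast _ (dmx_tens H IH)) _.
rewrite -castmxN castmx_mulmx [in RHS]mulNmx [in RHS]mulmxDl !tensmx_mul !mul1mx.
by rewrite !mulNmx tensmxNl tensmxNr opprD.
Qed.

Definition cmx m n (f : R -> 'M[R]_(m, n)) := forall i j, continuous (fun u => f u i j).

Lemma cmx_lmul m n p (A : 'M[R]_(m, n)) (f : R -> 'M[R]_(n, p)) :
  cmx f -> cmx (fun u => A *m f u).
Proof.
move=> H i j.
have -> : (fun u => (A *m f u) i j) = (fun u => \sum_(k <- index_enum _) A i k * f u k j).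
  by apply: funext => u; rewrite mxE.
apply: continuous_sumf => k t.
apply: (@continuousM R _ (fun=> A i k) (fun u => f u k j)); last exact: H.
exact: cst_continuous.
Qed.

Lemma cmx_vpow n (x : R -> 'cV[R]_n) r : cmx x -> cmx (fun u => vpow (x u) r).
Proof.
move=> H; elim: r => [|r IH] /= i j.
  exact: cst_continuous.
have -> : (fun u => castmx (esym (expnS n r), muln1 1) (x u *t vpow (x u) r) i j) =
  (fun u => x u (mxtens_unindex (cast_ord (esym (esym (expnS n r))) i)).1
                (mxtens_unindex (cast_ord (esym (muln1 1)) j)).1 *
            vpow (x u) r (mxtens_unindex (cast_ord (esym (esym (expnS n r))) i)).2
                (mxtens_unindex (cast_ord (esym (muln1 1)) j)).2).
  by apply: funext => u; rewrite castmxE mxE.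
move=> t; apply: (@continuousM R _ (fun u => x u _ _) (fun u => vpow (x u) r _ _)).
  exact: H.
exact: IH.
Qed.

Lemma vpow_diag n r (j : 'I_n) : exists d : 'I_(n ^ r),
  forall u : 'cV[R]_n, vpow u r d ord0 = u j ord0 ^+ r.
Proof.
elim: r => [|r [d Hd]] /=.
  by exists ord0 => u; rewrite mxE expr0.
exists (cast_ord (esym (expnS n r)) (mxtens_index (j, d))) => u.
rewrite castmxE cast_ordK mxE mxtens_indexK /=.
set a := Ordinal _; set b := Ordinal _.
by rewrite (ord1 a) (ord1 b) Hd exprS.
Qed.

End VP.

Section Fin.
Variable R : realType.

Lemma tail_to (z : R -> R) (a : R) (p : nat) (C c : R) :
  (0 < p)%N -> 0 < c ->
  (forall t, 0 <= t -> `|z t - a| ^+ p <= C / (1 + c * t)) ->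
  z @ +oo --> a.
Proof.
move=> p0 c0 hb; apply/cvgrPdist_le => e e0.
have ep : 0 < e ^+ p by rewrite exprn_gt0.
exists (Num.max 0 (C / (c * e ^+ p))); split; first by rewrite num_real.
move=> t /=; rewrite gt_max => /andP[t0 tC].
rewrite distrC.
have H := hb t (ltW t0).
have ct : 0 < 1 + c * t by rewrite ltr_wpDr // mulr_ge0 // ltW.
have : C / (1 + c * t) <= e ^+ p.
  rewrite ler_pdivrMr //.
  move: tC; rewrite ltr_pdivrMr ?mulr_gt0 // => tC.
  nra.
by move=> /(le_trans H); rewrite ler_pXn2r // ?nnegrE ?normr_ge0 ?(ltW e0).
Qed.

Lemma const_on m (f : R -> R) (sigma : R -> 'I_m) :
  switching_signal sigma -> continuous f ->
  (forall t, 0 < t -> locally_const_at sigma t -> is_derive t 1 f 0) ->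
  forall t, 0 <= t -> f t = f 0.
Proof.
move=> sw cf H t t0; have [s Hs] := sw t.
have lc u : 0 < u -> u < t -> u \notin s -> locally_const_at sigma u.
  by move=> u0 ut us; apply: Hs => //; rewrite (ltW u0) (ltW ut).
apply/eqP; rewrite eq_le; apply/andP; split.
  apply: (@nonincr _ f (fun=> 0) s 0 t) => // u u0 ut us.
  by split => //; apply: H => //; apply: lc.
rewrite -lerN2; apply: (@nonincr _ (fun u => - f u) (fun=> 0) s 0 t) => //.
  by move=> u; apply: continuousN; apply: cf.
move=> u u0 ut us; split => //.
have := is_deriveN (H u u0 (lc u u0 ut us)); rewrite oppr0; exact.
Qed.

End Fin.

Local Close Scope classical_set_scope.

Theorem corollary6 (R : realType) (n m r : nat) (A : 'I_m -> 'M[R]_n)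
  (Q : 'M[R]_(n.-1, n)) (P : 'M[R]_(n ^ r)) :
  (0 < r)%N ->
  (forall k, weight_balanced (signed_laplacian (A k))) ->
  (forall k, EEP (- signed_laplacian (A k))) ->
  Q *m Q^T = 1%:M ->
  Q *m ones R n = 0 ->
  posdef P ->
  (forall k,
     let Lh := kron_sum (signed_laplacian (A k)) r in
     let Qh := kron_pow Q r in
     negdef (- (Qh *m Lh *m P *m Qh^T) - Qh *m P *m Lh^T *m Qh^T)) ->
  consensus_set (fun k => signed_laplacian (A k)).
Proof.
move=> r0 wb _ QQ Q1 [PT PP] hneg sigma sw x [xcont xder].
have [n0|n_pos] := posnP n.
  by exists 0 => i; have := ltn_ord i; rewrite [X in (_ < X)%N]n0.
have L1 k : signed_laplacian (A k) *m ones R n = 0 by apply: lap_ones.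
have LT1 k : (ones R n)^T *m signed_laplacian (A k) = 0.
  by rewrite -[signed_laplacian _]trmxK -trmx_mul wb trmx0.
pose Lt k := kron_sum (Q *m signed_laplacian (A k) *m Q^T) r.
pose Qh := kron_pow Q r.
pose Pt := Qh *m P *m Qh^T.
have QhL k : Qh *m kron_sum (signed_laplacian (A k)) r = Lt k *m Qh.
  by apply: kron_pow_sum; apply: QL_comm.
have QhQh : Qh *m Qh^T = 1%:M by apply: kron_pow_tr.
have Ptpd : posdef Pt.
  split; first by rewrite /Pt !trmx_mul trmxK PT mulmxA.
  move=> v v0.
  have w0 : Qh^T *m v != 0.
    apply: contraNneq v0 => e; by rewrite -(mul1mx v) -QhQh -mulmxA e mulmx0.
  by have := PP _ w0; rewrite trmx_mul trmxK /Pt !mulmxA.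
have Spos k (v : 'cV[R]_(n.-1 ^ r)) : v != 0 ->
    0 < (v^T *m (Lt k *m Pt + Pt *m (Lt k)^T) *m v) ord0 ord0.
  have := hneg k; cbv zeta; case=> _ Hk v0.
  have EX : - (Qh *m kron_sum (signed_laplacian (A k)) r *m P *m Qh^T) -
      Qh *m P *m (kron_sum (signed_laplacian (A k)) r)^T *m Qh^T =
      - (Lt k *m Pt + Pt *m (Lt k)^T).
    rewrite opprD; congr (_ - _); first by rewrite QhL /Pt !mulmxA.
    by rewrite -!mulmxA -trmx_mul QhL trmx_mul /Pt !mulmxA.
  by have := Hk v v0; rewrite EX mulmxN mulNmx mxE oppr_lt0.
pose y t := Qh *m vpow (x t) r.
have xc : cmx x by move=> i j; rewrite (ord1 j); apply: xcont.
have ycont i : continuous (fun t => y t i ord0).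
  by have := cmx_lmul (A := Qh) (cmx_vpow (r := r) xc); apply.
have Hx t : 0 < t -> locally_const_at sigma t ->
    dmx x t (- signed_laplacian (A (sigma t)) *m x t).
  by move=> t0 lc i j; rewrite (ord1 j); apply: xder.
have yder t : 0 < t -> locally_const_at sigma t -> dmx y t (- Lt (sigma t) *m y t).
  move=> t0 lc; apply: dmx_eq (dmx_lmul Qh (dmx_vpow (r := r) (Hx t t0 lc))) _.
  by rewrite mulNmx mulmxN mulmxA QhL -mulmxA mulNmx.
have [C [c [c0 [C0 hb]]]] := core Ptpd Spos sw ycont yder.
pose u t := Q *m x t.
have yu t : y t = vpow (u t) r by apply: kron_pow_vpow.
have ub t j : 0 <= t -> `|u t j ord0| ^+ (2 * r) <= C / (1 + c * t).
  move=> t0; have [d Hd] := vpow_diag R r j.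
  by have := hb t t0 d; rewrite yu Hd normrX -exprM mulnC.
pose phi t := ((ones R n)^T *m x t) ord0 ord0.
have phic : forall t, 0 <= t -> phi t = phi 0.
  apply: (const_on sw).
    by have := cmx_lmul (A := (ones R n)^T) xc; apply.
  move=> t t0 lc; apply: is_derive_eq (dmx_lmul _ (Hx t t0 lc) ord0 ord0) _.
  by rewrite mulNmx mulmxN mulmxA LT1 mul0mx oppr0 mxE.
exists (n%:R^-1 * phi 0) => i.
rewrite !mxE mulr1.
pose B := \sum_j `|Q j i|.
have B0 : 0 <= B by apply: sumr_ge0.
apply: (@tail_to _ _ _ (2 * r) (B ^+ (2 * r) * C) c) => //; first by rewrite muln_gt0.
move=> t t0.
have ct : 0 <= 1 + c * t by rewrite addr_ge0 // mulr_ge0 // ltW.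
have xdec : x t i ord0 - n%:R^-1 * phi 0 = \sum_j Q j i * u t j ord0.
  have := congr1 (fun M => (M *m x t) i ord0) (QtQ n_pos QQ Q1).
  have e : (ones R n *m (ones R n)^T *m x t) i ord0 = phi t.
    by rewrite -mulmxA mxE big_ord1 mxE mul1r.
  rewrite /= mul1mx mulmxDl mxE -scalemxAl [X in _ + X]mxE e phic // -(mulmxA Q^T Q) => <-.
  by rewrite addrK mxE; apply: eq_bigr => j _; rewrite mxE.
rewrite xdec.
pose mu := \big[Num.max/0]_j `|u t j ord0|.
have muP : 0 <= mu /\ mu ^+ (2 * r) <= C / (1 + c * t).
  rewrite /mu; elim/big_ind: _.
  - split => //; rewrite expr0n muln_eq0 /= eqn0Ngt r0 /=.
    exact: divr_ge0.
  - move=> a b [a0 ha] [b0 hb']; have [ab|ba] := leP a b.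
      by split.
    by split.
  - by move=> j _; split; [apply: normr_ge0 | apply: ub].
have hs : `|\sum_j Q j i * u t j ord0| <= B * mu.
  apply: le_trans (ler_norm_sum _ _ _) _; rewrite /B mulr_suml.
  apply: ler_sum => j _; rewrite normrM; apply: ler_wpM2l => //.
  by rewrite /mu (bigD1 j) //= le_max lexx.
apply: le_trans (_ : (B * mu) ^+ (2 * r) <= _).
  by apply: lerXn2r; rewrite ?nnegrE ?mulr_ge0 //; case: muP.
rewrite exprMn -mulrA; apply: ler_wpM2l; first exact: exprn_ge0.
by case: muP.
Qed.
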